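(* Let $P,Q\in\mathrm{Mat}_d(\mathbb{Q})$. Then $P,Q$ are irreducible if and only if $P$ and $Q$ are invertible and the characteristic polynomial of $P^{-1}Q$ is irreducible over $\mathbb{Q}$.
   Context: Matrices $P,Q\in\mathrm{Mat}_d(\mathbb{Q})$ are called irreducible if there are no non-trivial subspaces $U,V$ of $\mathbb{Q}^d$ of the same dimension (non-trivial meaning neither $\{0\}$ nor $\mathbb{Q}^d$) such that $PU\subseteq V$ and $QU\subseteq V$. *)

(* Defs.v *)
From HB Require Import structures.
From mathcomp Require Import all_boot all_order all_algebra.
Set Implicit Arguments. Unset Strict Implicit. Unset Printing Implicit Defensive.
Import GRing.Theory Num.Theory.
Local Open Scope ring_scope.

(* Subspaces of Q^d are represented as row spaces of d x d matrices over rat.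
   Vectors of Q^d are column vectors acted on by P (u |-> P u); on row vectors
   (the MathComp convention for row spaces) this action is u |-> u *m P^T.
   So "P U ⊆ V" is (U *m P^T <= V)%MS. *)
Definition mx_pair_irreducible (d : nat) (P Q : 'M[rat]_d) : Prop :=
  ~ exists U V : 'M[rat]_d,
      [/\ \rank U = \rank V, (0 < \rank U)%N, (\rank U < d)%N,
          (U *m P^T <= V)%MS & (U *m Q^T <= V)%MS].

(* Main.v *)
Require Import Defs.
From HB Require Import structures.
From mathcomp Require Import all_boot all_order all_algebra.
From mathcomp Require Import zify.
Import GRing.Theory Num.Theory.
Local Open Scope ring_scope.

Section Core.
Variable F : fieldType.
Variable n : nat.
Local Notation N := n.+1.
Implicit Types (A : 'M[F]_N) (u : 'rV[F]_N).

Definition kry A u m : 'M[F]_(m, N) := \matrix_(i < m) (u *m A ^+ i).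

Lemma kry_poly A u (r : {poly F}) m : (size r <= m)%N ->
  (u *m horner_mx A r <= kry A u m)%MS.
Proof.
move=> sr; apply/submxP; exists (\row_(i < m) r`_i).
have e : r = \poly_(i < m) r`_i.
  apply/polyP => k; rewrite coef_poly; case: ifP => // /negbT; rewrite -leqNgt => km.
  by rewrite nth_default // (leq_trans sr km).
rewrite {1}e poly_def linear_sum /= mulmx_sumr mulmx_sum_row.
apply: eq_bigr => i _.
rewrite linearZ /= rmorphXn /= horner_mx_X rowK !mxE.
by rewrite scalemxAr.
Qed.

Lemma kry_mod A u (g r : {poly F}) m : horner_mx A g = 0 -> g != 0 ->
  (size g <= m.+1)%N -> (u *m horner_mx A r <= kry A u m)%MS.
Proof.
move=> hg g0 sg; rewrite [r](divp_eq r g) rmorphD rmorphM /= hg mulr0 add0r.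
apply: kry_poly; rewrite -ltnS; exact: leq_trans (ltn_modpN0 r g0) sg.
Qed.

Lemma kry_invariant A u : (kry A u N *m A <= kry A u N)%MS.
Proof.
apply/row_subP => i; rewrite row_mul rowK -mulmxA.
have -> : A ^+ i *m A = A ^+ i.+1 by rewrite exprSr mulmxE.
have -> : A ^+ i.+1 = horner_mx A ('X ^+ i.+1 : {poly F}) by rewrite rmorphXn /= horner_mx_X.
apply: (@kry_mod _ _ (char_poly A)); first exact: Cayley_Hamilton.
  exact: monic_neq0 (char_poly_monic A).
by rewrite size_char_poly.
Qed.

Lemma u_kry A u : (u <= kry A u N)%MS.
Proof.
apply: submx_trans (row_sub ord0 (kry A u N)).
by rewrite rowK expr0 mulmx1.
Qed.

Lemma nz_row m (U : 'M[F]_(m, N)) : U != 0 -> exists i, row i U != 0.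
Proof.
move=> U0; case: (pickP (fun i => row i U != 0)) => [i Hi|H]; first by exists i.
case/negP: U0; apply/eqP/row_matrixP => i; rewrite row0.
by move: (H i) => /negbFE/eqP.
Qed.

Definition noinv A := forall U : 'M[F]_N,
  (0 < \rank U)%N -> (\rank U < N)%N -> ~ (U *m A <= U)%MS.

Lemma noinv_poly A : noinv A -> forall g : {poly F}, g != 0 ->
  horner_mx A g = 0 -> (size g <= N)%N -> False.
Proof.
move=> hA g g0 hg sg.
pose u : 'rV[F]_N := const_mx 1.
have u0 : u != 0.
  by apply/eqP => /matrixP /(_ ord0 ord0); rewrite !mxE; apply/eqP; exact: oner_neq0.
apply: (hA (kry A u N)); last exact: kry_invariant.
- rewrite lt0n mxrank_eq0; apply: contra u0 => /eqP K0.
  by rewrite -submx0 -K0 u_kry.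
- have s : (kry A u N <= kry A u (size g).-1)%MS.
    apply/row_subP => i; rewrite rowK.
    have -> : A ^+ i = horner_mx A ('X ^+ i : {poly F}) by rewrite rmorphXn /= horner_mx_X.
    exact: (kry_mod A u g _ _ hg g0 (leqSpred _)).
  apply: leq_ltn_trans (mxrankS s) _; apply: leq_ltn_trans (rank_leq_row _) _.
  have : (0 < size g)%N by rewrite size_poly_gt0.
  lia.
Qed.

Lemma pow_sub A u (U : 'M[F]_N) i : (u <= U)%MS -> (U *m A <= U)%MS ->
  (u *m A ^+ i <= U)%MS.
Proof.
move=> uU UA; elim: i => [|i IH]; first by rewrite expr0 mulmx1.
rewrite exprSr -[A ^+ i * A]/(A ^+ i *m A) mulmxA.
exact: submx_trans (submxMr _ IH) UA.
Qed.

Lemma irr_noinv A : irreducible_poly (char_poly A) -> noinv A.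
Proof.
move=> irr U r0 rd UA.
have U0 : U != 0 by rewrite -mxrank_eq0 -lt0n.
have [i ui] := nz_row _ _ U0; set u := row i U in ui.
have KU : (kry A u N <= U)%MS.
  by apply/row_subP => j; rewrite rowK; apply: pow_sub => //; exact: row_sub.
have nf : ~~ row_free (kry A u N).
  rewrite /row_free; apply/eqP => e; move: (mxrankS KU); rewrite e; lia.
rewrite -kermx_eq0 in nf.
have [j wj] := nz_row _ _ nf; set w := row j _ in wj.
have wK : w *m kry A u N = 0 by apply/eqP; rewrite -sub_kermx row_sub.
pose g : {poly F} := \poly_(k < N) w 0 (inord k).
have g0 : g != 0.
  apply: contra wj => /eqP g0; apply/eqP/matrixP => a b.
  rewrite (ord1 a); move: (congr1 (fun p : {poly F} => p`_b) g0).
  by rewrite /g coef_poly ltn_ord inord_val coef0 => ->; rewrite mxE.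
have hg : u *m horner_mx A g = 0.
  rewrite -wK /g poly_def linear_sum /= mulmx_sumr mulmx_sum_row.
  apply: eq_bigr => k _.
  by rewrite linearZ /= rmorphXn /= horner_mx_X rowK inord_val scalemxAr.
have cop : coprimep g (char_poly A).
  rewrite coprimep_def; apply/negPn/negP => hs.
  have e := irr _ hs (dvdp_gcdr g (char_poly A)).
  have := dvdp_gcdl g (char_poly A); rewrite (eqp_dvdl _ e) => /(dvdp_leq g0).
  rewrite size_char_poly => h; have := leq_trans h (size_poly N (fun k => w 0 (inord k))); by rewrite ltnn.
case/Bezout_eq1_coprimepP: cop => -[a b] /= e.
have : u *m horner_mx A 1 = 0.
  rewrite -e rmorphD !rmorphM /= Cayley_Hamilton mulr0 addr0.
  by rewrite -(comm_horner_mx2 A g a) -mulmxE mulmxA hg mul0mx.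
by rewrite rmorph1 mulmx1 => u0; rewrite u0 eqxx in ui.
Qed.

Lemma noinv_irr A : noinv A -> irreducible_poly (char_poly A).
Proof.
move=> hA; split; first by rewrite size_char_poly.
move=> q sq qp; case E: (q %= char_poly A) => //; exfalso.
have p0 : char_poly A != 0 := monic_neq0 (char_poly_monic A).
have q0 : q != 0 by apply: contra p0 => /eqP q0; rewrite -dvd0p -q0.
have sqp := dvdp_leq p0 qp.
have sqn : size q != size (char_poly A) by rewrite dvdp_size_eqp // E.
rewrite size_char_poly in sqp sqn.
have sqN : (size q <= N)%N by rewrite -ltnS ltn_neqAle sqn sqp.
have sq2 : (1 < size q)%N.
  by move: sq; rewrite -size_poly_gt0 in q0; move: q0; case: (size q) => [|[|k]].
set hq := horner_mx A q.
have WA : (kermx hq *m A <= kermx hq)%MS.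
  rewrite sub_kermx -mulmxA.
  have -> : A *m hq = hq *m A by apply: comm_mx_horner; exact: comm_mx_refl.
  by rewrite mulmxA mulmx_ker mul0mx.
case: (ltnP 0 (\rank (kermx hq))) => r0; last first.
  have : kermx hq == 0 by rewrite -mxrank_eq0 -leqn0.
  rewrite kermx_eq0 row_free_unit => hu.
  have [h ph] := dvdpP _ _ qp.
  have h0 : h != 0 by apply: contra p0 => /eqP h0; rewrite ph h0 mul0r.
  apply: (noinv_poly _ hA _ h0).
    have := Cayley_Hamilton A; rewrite ph rmorphM /= -/hq -mulmxE => e.
    by rewrite -(mulmxK hu (horner_mx A h)) e mul0mx.
  have := size_mul h0 q0; rewrite -ph size_char_poly.
  move: sq2; case: (size q) => [|[|k]] //= _; case: (size h) => // t; lia.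
case: (ltnP (\rank (kermx hq)) N) => rd; first exact: hA _ r0 rd WA.
have : row_full (kermx hq) by rewrite /row_full eqn_leq rank_leq_col rd.
rewrite row_full_unit => hu.
apply: (noinv_poly _ hA _ q0 _ sqN).
by rewrite -/hq -(mulKmx hu hq) mulmx_ker mulmx0.
Qed.
End Core.

Lemma char_poly_tr (F : fieldType) n (A : 'M[F]_n.+1) :
  char_poly A^T = char_poly A.
Proof.
rewrite /char_poly -[RHS]det_tr; congr (\det _).
by rewrite /char_poly_mx linearB /= tr_scalar_mx map_trmx.
Qed.


Lemma sing_witness n (hn : (0 < n)%N) (P Q : 'M[rat]_n.+1) : P \notin unitmx ->
  exists U V : 'M[rat]_n.+1,
      [/\ \rank U = \rank V, (0 < \rank U)%N, (\rank U < n.+1)%N,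
          (U *m P^T <= V)%MS & (U *m Q^T <= V)%MS].
Proof.
move=> Pu.
have : kermx P^T != 0 by rewrite kermx_eq0 row_free_unit unitmx_tr.
case/nz_row => i; set u := row i _ => u0.
have uP : u *m P^T = 0 by apply/eqP; rewrite -sub_kermx row_sub.
have gu : (<<u>> <= u)%MS by rewrite genmxE.
have rU : \rank <<u>>%MS = 1%N by rewrite mxrank_gen rank_rV u0.
case: (eqVneq (u *m Q^T) 0) => uQ.
  exists <<u>>%MS, <<u>>%MS; split => //; first by rewrite rU.
    by rewrite rU.
    by apply: submx_trans (submxMr P^T gu) _; rewrite uP sub0mx.
  by apply: submx_trans (submxMr Q^T gu) _; rewrite uQ sub0mx.
exists <<u>>%MS, <<u *m Q^T>>%MS; split => //; first by rewrite rU mxrank_gen rank_rV uQ.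
- by rewrite rU.
- by rewrite rU.
- by apply: submx_trans (submxMr P^T gu) _; rewrite uP sub0mx.
by apply: submx_trans (submxMr Q^T gu) _; rewrite genmxE.
Qed.

Theorem theorem5p2 (d : nat) (hd : (2 <= d)%N) (P Q : 'M[rat]_d) :
  mx_pair_irreducible P Q <->
  [/\ P \in unitmx, Q \in unitmx & irreducible_poly (char_poly (invmx P *m Q))].
Proof.
case: d hd P Q => [//|n] hd P Q.
have hn : (0 < n)%N by [].
set A := (invmx P *m Q)^T.
have AP : P \in unitmx -> A *m P^T = Q^T.
  by move=> Pu; rewrite /A -trmx_mul mulKVmx.
split.
- move=> Hirr.
  have Pu : P \in unitmx.
    case Pu: (P \in unitmx) => //; exfalso; apply: Hirr.
    by apply: sing_witness => //; rewrite Pu.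
  have Qu : Q \in unitmx.
    case Qu: (Q \in unitmx) => //; exfalso; apply: Hirr.
    have [U [V [r1 r2 r3 h1 h2]]] := @sing_witness n hn Q P (negbT Qu).
    by exists U, V; split.
  split => //; rewrite -char_poly_tr; apply: noinv_irr => U r0 rd UA.
  apply: Hirr; exists U, (U *m P^T); split => //.
  - by rewrite mxrankMfree // row_free_unit unitmx_tr.
  - by rewrite -(AP Pu) mulmxA submxMr.
- case=> Pu Qu irr [U [V [rk r0 rd hP hQ]]].
  have e : (U *m P^T == V)%MS.
    have := mxrank_leqif_eq hP; rewrite mxrankMfree ?row_free_unit ?unitmx_tr //.
    by case => _ <-; rewrite rk.
  rewrite -(eqmxP e) in hQ.
  rewrite -char_poly_tr in irr.
  apply: (@irr_noinv _ _ _ irr _ r0 rd).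
  have PTu : P^T \in unitmx by rewrite unitmx_tr.
  rewrite -/A; have -> : A = Q^T *m invmx P^T by rewrite -(AP Pu) mulmxK.
  by rewrite mulmxA -[U in (_ <= U)%MS](mulmxK PTu U) submxMr.
Qed.
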